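(* Let $G$ be a finite Eulerian graph (every vertex has even degree) in which every edge is labelled $o$ or $s$, and let $g(G)$ be the number of balanced factorientations of $G$ with respect to these labels. Then $g(G)\leq \varepsilon(G)$, where $\varepsilon(G)$ is the number of Eulerian orientations of $G$.
   Context: A factorientation of a graph whose edges are labelled $o$ or $s$ consists of orienting every $o$-edge and deciding for every $s$-edge whether it is selected or not. The mixed degree of a vertex $v$ is the number of $o$-edges oriented towards $v$ plus the number of selected $s$-edges incident to $v$. A factorientation is balanced if every vertex $v$ has mixed degree $d_G(v)/2$. An Eulerian orientation is an orientation in which every vertex has in-degree equal to out-degree. *)

(* Defs.v *)
From mathcomp Require Import all_boot.
Set Implicit Arguments. Unset Strict Implicit. Unset Printing Implicit Defensive.

(* A finite loopless multigraph: vertex type V, edge type E, each edge e has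
   two distinct endpoints [src e] and [tgt e] (the order is only a reference
   orientation). *)
Section Graph.
Variables (V E : finType) (src tgt : E -> V).

Definition incident (e : E) (v : V) : bool := (src e == v) || (tgt e == v).

(* degree of v (no loops, so each incident edge counts once) *)
Definition deg (v : V) : nat := #|[set e : E | incident e v]|.

Definition eulerian_graph : Prop := forall v : V, ~~ odd (deg v).

Definition head (ori : {ffun E -> bool}) (e : E) : V := if ori e then tgt e else src e.
Definition tail (ori : {ffun E -> bool}) (e : E) : V := if ori e then src e else tgt e.

Definition indeg (ori : {ffun E -> bool}) (v : V) : nat := #|[set e : E | head ori e == v]|.
Definition outdeg (ori : {ffun E -> bool}) (v : V) : nat := #|[set e : E | tail ori e == v]|.

Definition eulerian_orientation (ori : {ffun E -> bool}) : bool :=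
  [forall v : V, indeg ori v == outdeg ori v].

(* Labels: [lab e = true] means e is an o-edge, [false] means an s-edge.
   A factorientation is a function [f : {ffun E -> bool}]: on an o-edge it is
   the orientation (as above), on an s-edge it says whether e is selected. *)
Definition mixed_deg (lab : E -> bool) (f : {ffun E -> bool}) (v : V) : nat :=
  #|[set e : E | if lab e then head f e == v else f e && incident e v]|.

Definition balanced (lab : E -> bool) (f : {ffun E -> bool}) : bool :=
  [forall v : V, (mixed_deg lab f v).*2 == deg v].

Definition num_balanced_factorientations (lab : E -> bool) : nat :=
  #|[set f : {ffun E -> bool} | balanced lab f]|.

Definition num_eulerian_orientations : nat :=
  #|[set ori : {ffun E -> bool} | eulerian_orientation ori]|.

End Graph.

(* Main.v *)
Require Import Defs.
From mathcomp Require Import all_boot zify.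
Set Implicit Arguments. Unset Strict Implicit. Unset Printing Implicit Defensive.

Lemma inj_le (T1 T2 : finType) (A : {set T1}) (B : {set T2}) (f : T1 -> T2) :
  {in A &, injective f} -> (forall x, x \in A -> f x \in B) -> #|A| <= #|B|.
Proof.
move=> inj sub; rewrite -(card_in_imset inj); apply: subset_leq_card.
by apply/subsetP => y /imsetP[x xA ->]; exact: sub.
Qed.

Lemma exists_pi (T : finType) (K : eqType) (k k' : T -> K) :
  (forall x, #|[set h | k h == x]| = #|[set h | k' h == x]|) ->
  exists pi : T -> T, injective pi /\ forall h, k' (pi h) = k h.
Proof.
move=> Hc.
pose S h := enum [set y | k y == k h].
pose S' h := enum [set y | k' y == k h].
have inS h : h \in S h by rewrite mem_enum inE.
have szS h : size (S h) = size (S' h) by rewrite -!cardE Hc.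
exists (fun h => nth h (S' h) (index h (S h))); split; last first.
  move=> h; have: nth h (S' h) (index h (S h)) \in S' h.
    by apply: mem_nth; rewrite -szS index_mem.
  by rewrite mem_enum inE => /eqP.
move=> h1 h2 /= E.
have Ek : k h1 = k h2.
  have m1 : nth h1 (S' h1) (index h1 (S h1)) \in S' h1.
    by apply: mem_nth; rewrite -szS index_mem.
  have m2 : nth h2 (S' h2) (index h2 (S h2)) \in S' h2.
    by apply: mem_nth; rewrite -szS index_mem.
  move: m1 m2; rewrite E !mem_enum !inE => /eqP <- /eqP ->. by [].
have ES : S h1 = S h2 by rewrite /S Ek.
have ES' : S' h1 = S' h2 by rewrite /S' Ek.
have i1 : index h1 (S h1) < size (S' h1) by rewrite -szS index_mem.
have i2 : index h2 (S h1) < size (S' h1) by rewrite -szS ES index_mem.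
move: E; rewrite -ES' -ES (set_nth_default h1 h2 i2) => /eqP.
rewrite nth_uniq ?enum_uniq // => /eqP Ei.
by rewrite -(nth_index h1 (inS h1)) Ei ES nth_index.
Qed.

Lemma ltn_flip a b : a != b -> (b < a) = ~~ (a < b).
Proof. by move=> H; rewrite ltnNge leq_eqVlt negb_or; move: H; case: ltngtP. Qed.

Lemma sumb (T : finType) (P : pred T) : \sum_(x : T) (P x : nat) = #|[set x | P x]|.
Proof. by rewrite -sum1dep_card [RHS]big_mkcond; apply: eq_bigr => x _; case: (P x). Qed.

Section G.
Variables (V E : finType) (src tgt : E -> V).
Hypothesis loopless : forall e : E, src e != tgt e.

Notation H := (E * bool)%type.
Definition vtx (h : H) : V := if h.2 then tgt h.1 else src h.1.
Definition chi (lam : E -> bool) (f : {ffun E -> bool}) (h : H) : bool :=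
  if lam h.1 then f h.1 == h.2 else f h.1.
Definition cntv (c : H -> bool) v := #|[set h | (vtx h == v) && c h]|.
Definition dv v := #|[set h : H | vtx h == v]|.
Definition mybal lam f := [forall v, (cntv (chi lam f) v).*2 == dv v].

Ltac bcase x H := case: (boolP x) => H; rewrite /= ?H ?(negbTE H) /=.
Ltac fin := repeat (match goal with H : is_true ?x |- context[?x] => rewrite H /= end); rewrite ?eqxx //=; try (match goal with Hs : is_true (?a == ?v), Ht : is_true (?b == ?v) |- _ => by rewrite (eqP Hs) (eqP Ht) eqxx end).

Lemma L1 lab f v : mixed_deg src tgt lab f v = cntv (chi lab f) v.
Proof.
rewrite /mixed_deg /cntv.
rewrite -(card_in_imset (f := fun e => (e, tgt e == v))); last first.
  by move=> x y _ _ [].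
apply: eq_card => -[e b]; rewrite [in RHS]inE.
apply/imsetP/idP.
  move=> [e' He' [-> ->]]; have L := loopless e'; move: He' L; rewrite inE /vtx /chi /Defs.head /incident /=.
  bcase (lab e') Hl; bcase (f e') Hf; bcase (src e' == v) Hs; bcase (tgt e' == v) Ht; fin.
move=> H1; have L := loopless e; exists e; last first.
  move: H1 L; rewrite /vtx /chi /=.
  bcase (lab e) Hl; bcase (f e) Hf; case: b => /=; bcase (src e == v) Hs; bcase (tgt e == v) Ht; fin.
move: H1 L; rewrite inE /vtx /chi /Defs.head /incident /=.
  bcase (lab e) Hl; bcase (f e) Hf; case: b => /=; bcase (src e == v) Hs; bcase (tgt e == v) Ht; fin.
Qed.

Lemma L2 v : deg src tgt v = dv v.
Proof.
rewrite /deg /dv.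
rewrite -(card_in_imset (f := fun e => (e, tgt e == v))); last first.
  by move=> x y _ _ [].
apply: eq_card => -[e b]; rewrite [in RHS]inE.
apply/imsetP/idP.
  move=> [e' He' [-> ->]]; have L := loopless e'; move: He' L; rewrite inE /vtx /incident /=.
  bcase (src e' == v) Hs; bcase (tgt e' == v) Ht; fin.
move=> H1; have L := loopless e; exists e; last first.
  move: H1 L; rewrite /vtx /=.
  case: b => /=; bcase (src e == v) Hs; bcase (tgt e == v) Ht; fin.
move: H1 L; rewrite inE /vtx /incident /=.
  case: b => /=; bcase (src e == v) Hs; bcase (tgt e == v) Ht; fin.
Qed.

Lemma L3 ori : eulerian_orientation src tgt ori = mybal (fun _ => true) ori.
Proof.
rewrite /eulerian_orientation /mybal; apply: eq_forallb => v.
rewrite -L2 -L1.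
have -> : mixed_deg src tgt (fun _ => true) ori v = indeg src tgt ori v by [].
have -> : deg src tgt v = indeg src tgt ori v + outdeg src tgt ori v.
  rewrite /deg /indeg /outdeg -(cardsID [set e | Defs.head src tgt ori e == v]).
  congr (_ + _); apply: eq_card => e; rewrite !inE /Defs.head /tail /incident;
  have L := loopless e; move: L; bcase (ori e) Ho; bcase (src e == v) Hs; bcase (tgt e == v) Ht; fin.
by rewrite -addnn eqn_add2l.
Qed.

Definition phi (h : H) : H := (h.1, ~~ h.2).
Definition validT (T : {ffun H -> H}) :=
  [forall h, (T h != h) && (T (T h) == h) && (vtx (T h) == vtx h)].
Definition comp (c : H -> bool) (T : {ffun H -> H}) := [forall h, c (T h) != c h].
Definition NN (c : H -> bool) := #|[set T | validT T && comp c T]|.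

Lemma validP T : validT T -> [/\ forall h, T h != h, forall h, T (T h) = h & forall h, vtx (T h) = vtx h].
Proof.
move/forallP => HT; split => h; have /andP[/andP[a b] c] := HT h => //; exact/eqP.
Qed.

Lemma cnt_split c v : dv v = cntv c v + #|[set h | (vtx h == v) && ~~ c h]|.
Proof.
rewrite /dv /cntv -(cardsID [set h | c h] [set h | vtx h == v]).
congr addn; apply: eq_card => h; rewrite !inE //.
  exact: andbC.
Qed.

Lemma comp_bal c T : validT T -> comp c T -> forall v, (cntv c v).*2 = dv v.
Proof.
move=> /validP[T1 T2 T3] /forallP Hc v.
have injT : injective T by apply: (can_inj T2).
have le1 : cntv c v <= #|[set h | (vtx h == v) && ~~ c h]|.
  apply: (inj_le (f := T)) => [x y _ _|x]; first exact: injT.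
  rewrite !inE T3 => /andP[-> cx] /=; have := Hc x; by rewrite cx; case: (c (T x)).
have le2 : #|[set h | (vtx h == v) && ~~ c h]| <= cntv c v.
  apply: (inj_le (f := T)) => [x y _ _|x]; first exact: injT.
  rewrite !inE T3 => /andP[-> cx] /=; have := Hc x; by move: cx; case: (c x); case: (c (T x)).
rewrite (cnt_split c v); lia.
Qed.

Lemma cntk c v b : #|[set h | (vtx h, c h) == (v, b)]| =
  if b then cntv c v else #|[set h | (vtx h == v) && ~~ c h]|.
Proof.
by case: b; apply: eq_card => h; rewrite !inE xpair_eqE ?eqb_id ?eqbF_neg.
Qed.

Lemma cntN c v : (cntv c v).*2 = dv v -> #|[set h | (vtx h == v) && ~~ c h]| = cntv c v.
Proof. by rewrite (cnt_split c v); lia. Qed.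

Lemma NN_pos c : (forall v, (cntv c v).*2 = dv v) -> 0 < NN c.
Proof.
move=> Hb.
have EP : forall x, #|[set h | (vtx h, c h) == x]| = #|[set h | (vtx h, ~~ c h) == x]|.
  move=> [v b]; rewrite cntk.
  have -> : #|[set h | (vtx h, ~~ c h) == (v, b)]| = #|[set h | (vtx h, (negb \o c) h) == (v, b)]| by [].
  have E1 : cntv (negb \o c) v = #|[set h | (vtx h == v) && ~~ c h]| by [].
  have E2 : #|[set h | (vtx h == v) && ~~ (negb \o c) h]| = cntv c v.
    by apply: eq_card => h; rewrite !inE /= negbK.
  rewrite cntk E1 E2 (cntN (Hb v)); by case: b.
have [pi [injpi Hpi]] := exists_pi EP.
have Hv h : vtx (pi h) = vtx h by case: (Hpi h).
have Hcc h : c (pi h) = ~~ c h by case: (Hpi h) => _ <-; rewrite negbK.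
pose q := finv pi.
have qK : cancel q pi by apply: f_finv.
have Kq : cancel pi q by apply: finv_f.
have Hvq h : vtx (q h) = vtx h by rewrite -{2}(qK h) Hv.
have Hcq h : c (q h) = ~~ c h by rewrite -{2}(qK h) Hcc negbK.
apply/card_gt0P; exists [ffun h => if c h then pi h else q h].
rewrite inE; apply/andP; split.
  apply/forallP => h; rewrite !ffunE.
  case: (boolP (c h)) => ch.
    rewrite Hcc ch /= Kq Hv !eqxx !andbT.
    by apply/eqP => Ep; move: (Hcc h); rewrite Ep ch.
  rewrite Hcq (negbTE ch) /= qK Hvq !eqxx !andbT.
  by apply/eqP => Ep; move: (Hcq h); rewrite Ep (negbTE ch).
apply/forallP => h; rewrite !ffunE.
by case: (boolP (c h)) => ch; rewrite ?Hcc ?Hcq ch.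
Qed.

Lemma NN_le c c' : (forall v, (cntv c v).*2 = dv v) -> (forall v, (cntv c' v).*2 = dv v) ->
  NN c <= NN c'.
Proof.
move=> Hb Hb'.
have EP : forall x, #|[set h | (vtx h, c h) == x]| = #|[set h | (vtx h, c' h) == x]|.
  move=> [v b]; rewrite !cntk (cntN (Hb v)) (cntN (Hb' v)).
  have : (cntv c v).*2 = (cntv c' v).*2 by rewrite Hb Hb'.
  rewrite -!muln2; by case: b => ?; lia.
have [pi [injpi Hpi]] := exists_pi EP.
have Hv h : vtx (pi h) = vtx h by case: (Hpi h).
have Hcc h : c' (pi h) = c h by case: (Hpi h).
pose q := finv pi.
have qK : cancel q pi by apply: f_finv.
have Kq : cancel pi q by apply: finv_f.
pose Phi (T : {ffun H -> H}) := [ffun h => pi (T (q h))].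
apply: (inj_le (f := Phi)).
  move=> T1 T2 _ _ EQ; apply/ffunP => h.
  have := congr1 (fun F : {ffun H -> H} => F (pi h)) EQ; rewrite /Phi !ffunE Kq.
  exact: injpi.
move=> T; rewrite !inE => /andP[/validP[T1 T2 T3] /forallP Hc]; apply/andP; split.
  apply/forallP => h; rewrite /Phi !ffunE Kq T2 qK eqxx andbT.
  rewrite (Hv (T (q h))) T3 -{4}(qK h) (Hv (q h)) eqxx andbT.
  by apply/eqP => Ep; have := T1 (q h); rewrite -(inj_eq injpi) Ep qK eqxx.
apply/forallP => h; rewrite /Phi !ffunE Hcc -{2}(qK h) Hcc; exact: Hc.
Qed.

Lemma chi_lin lam f h : chi lam f h = f h.1 (+) (lam h.1 && ~~ h.2).
Proof. by rewrite /chi; case: (lam h.1); case: (f h.1); case: h.2. Qed.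

Lemma exists_s0 T : validT T -> exists s0, comp (chi (fun _ => true) s0) T.
Proof.
move=> /validP[T1 T2 T3].
pose psi h := phi (T h).
have phiK : involutive phi by case=> e b; rewrite /phi /= negbK.
have injpsi : injective psi by move=> x y /(can_inj phiK)/(can_inj T2).
have key x : psi (T (psi x)) = T x by rewrite /psi T2 phiK.
have ikey i x : iter i psi (T (iter i psi x)) = T x.
  by elim: i => // i IH; rewrite [iter i.+1 psi x]iterS iterSr key IH.
have iinj i : injective (iter i psi).
  by elim: i => [|i IH] x y //= /injpsi; exact: IH.
have nc h : ~~ fconnect psi h (T h).
  apply/negP => /iter_findex; move: (findex _ _ _) => m.
  rewrite -(odd_double_half m) -addnn; case: (odd m) => Hm.
    have Em : nat_of_bool true + (m./2 + m./2) = m./2 + (m./2).+1 by rewrite add1n addnS.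
    move: Hm; rewrite Em iterD iterS -(ikey m./2 h) => /iinj Ep.
    set y := iter m./2 psi h in Ep; move: Ep; rewrite /psi /phi; case: (T y) => a b [] /eqP; by case: b.
  move: Hm; rewrite add0n iterD -(ikey m./2 h) => /iinj Ep.
  by move: (T1 (iter m./2 psi h)); rewrite -Ep eqxx.
have sym : connect_sym (frel psi) by move=> x y; apply: fconnect_sym.
pose rt x := froot psi x.
have rphi x : rt (phi x) = rt (T x).
  apply/esym/(rootP sym); have -> : phi x = psi (T x) by rewrite /psi T2.
  exact: fconnect1.
have rTphi x : rt (T (phi x)) = rt x.
  apply/(rootP sym); have {2}-> : x = psi (T (phi x)) by rewrite /psi T2 phiK.
  exact: fconnect1.
pose col x := (enum_rank (rt x) < enum_rank (rt (T x)))%N.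
have neq x : (enum_rank (rt x) : nat) != enum_rank (rt (T x)).
  by rewrite (inj_eq val_inj) (inj_eq enum_rank_inj) /rt (root_connect sym) nc.
have colT x : col (T x) = ~~ col x.
  by rewrite /col T2 ltn_flip // eq_sym.
have colphi x : col (phi x) = ~~ col x.
  by rewrite /col rphi rTphi ltn_flip // eq_sym.
exists [ffun e => col (e, true)].
have Hch h : chi (fun _ => true) [ffun e => col (e, true)] h = col h.
  case: h => e b; rewrite /chi ffunE /=; case: b; rewrite ?eqb_id ?eqbF_neg //.
  by rewrite -colphi.
apply/forallP => h; rewrite !Hch colT; by case: (col h).
Qed.

Lemma perT lam T : validT T ->
  #|[set f | comp (chi lam f) T]| <= #|[set f | comp (chi (fun _ => true) f) T]|.
Proof.
move=> vT; have [s0 Hs0] := exists_s0 vT.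
case: (set_0Vmem [set f | comp (chi lam f) T]) => [->|[s1]]; first by rewrite cards0.
rewrite inE => Hs1.
apply: (inj_le (f := fun f : {ffun E -> bool} => [ffun e : E => f e (+) s1 e (+) s0 e])).
  move=> f1 f2 _ _ EQ; apply/ffunP => e.
  have := congr1 (fun F : {ffun E -> bool} => F e) EQ; rewrite !ffunE.
  by case: (f1 e); case: (f2 e); case: (s1 e); case: (s0 e).
move=> f; rewrite !inE => /forallP Hf; apply/forallP => h.
move: (Hf h) (forallP Hs1 h) (forallP Hs0 h); rewrite !chi_lin !ffunE /=.
by case: (f (T h).1); case: (f h.1); case: (s1 (T h).1); case: (s1 h.1);
  case: (s0 (T h).1); case: (s0 h.1); case: (lam (T h).1); case: (lam h.1);
  case: (T h).2; case: h.2.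
Qed.

Lemma mainG lab : #|[set f | mybal lab f]| <= #|[set f | mybal (fun _ => true) f]|.
Proof.
case: (set_0Vmem [set f | mybal lab f]) => [->|[f1]]; first by rewrite cards0.
rewrite inE => Hf1.
have bal lam f : mybal lam f -> forall v, (cntv (chi lam f) v).*2 = dv v.
  by move/forallP => Hb v; apply/eqP.
pose C := NN (chi lab f1).
have Cpos : 0 < C := NN_pos (bal _ _ Hf1).
have NC lam f : mybal lam f -> NN (chi lam f) = C.
  by move=> Hf; apply/eqP; rewrite eqn_leq !NN_le //; exact: bal.
pose S lam := \sum_(f : {ffun E -> bool}) \sum_(T : {ffun H -> H})
   ((validT T && comp (chi lam f) T) : nat).
have SE lam : S lam = #|[set f | mybal lam f]| * C.
  rewrite /S -sum_nat_cond_const [RHS]big_mkcond /=; apply: eq_bigr => f _.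
  rewrite sumb; case: (boolP (mybal lam f)) => Hb; first exact: NC.
  apply/eqP; rewrite cards_eq0; apply/eqP/setP => T; rewrite !inE.
  apply/negbTE/negP => /andP[vT cT]; apply: (negP Hb); apply/forallP => v.
  by apply/eqP; exact: comp_bal vT cT v.
have : S lab <= S (fun _ => true).
  rewrite /S exchange_big [X in _ <= X]exchange_big /=; apply: leq_sum => T _.
  rewrite !sumb; case: (boolP (validT T)) => vT.
    have E1 lam : [set f | true && comp (chi lam f) T] = [set f | comp (chi lam f) T].
      by apply/setP => f; rewrite !inE.
    rewrite !E1; exact: perT.
  by apply: subset_leq_card; apply/subsetP => f; rewrite !inE.
by rewrite !SE leq_pmul2r.
Qed.
End G.

Theorem theorem1p10 (V E : finType) (src tgt : E -> V) (lab : E -> bool)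
  (loopless : forall e : E, src e != tgt e)
  (Heul : eulerian_graph src tgt) :
  num_balanced_factorientations src tgt lab <= num_eulerian_orientations src tgt.
Proof.
rewrite /num_balanced_factorientations /num_eulerian_orientations.
have -> : #|[set f | balanced src tgt lab f]| = #|[set f | mybal src tgt lab f]|.
  apply: eq_card => f; rewrite !inE /balanced /mybal; apply: eq_forallb => v.
  by rewrite (L1 loopless) (L2 loopless).
have -> : #|[set f | eulerian_orientation src tgt f]| = #|[set f | mybal src tgt (fun _ => true) f]|.
  by apply: eq_card => f; rewrite !inE (L3 loopless).
exact: mainG.
Qed.
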